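(* Fix a slope bound $s\ge0$, and let $\alpha=(a_1,\dots,a_w)$. Let $a_i,a_j\in\mathbb{L}^{t+1}_\alpha$ with $i<j$, and suppose $a_k\in\mathbb{L}^t_\alpha$ is the leftmost slope-proper predecessor of $a_i$. Then every slope-proper predecessor of $a_j$ is either $a_k$ or lies to the right of $a_k$ in $\mathbb{L}^t_\alpha$. In particular, the leftmost slope-proper predecessor of $a_j$, if it exists, is $a_k$ or an item to the right of $a_k$.
   Context: Let $\alpha=(a_1,\dots,a_w)$ be a finite sequence of real numbers, with items identified by their positions. Increasing subsequences are non-strict. $a_j$ is compatible with $a_i$ if $j<i$ and $a_j\le a_i$. $RL_\alpha(a)$ is the maximum length of an increasing subsequence ending at $a$. $a_j$ is a predecessor of $a_i$ if it is compatible with $a_i$ and $RL_\alpha(a_j)=RL_\alpha(a_i)-1$. The horizontal list $\mathbb{L}^t_\alpha$ is the list of items of rising length $t$, ordered by position; ''left of'' means earlier position. Items are colored black or non-black recursively by level: all items of $\mathbb{L}^1_\alpha$ are non-black, and an item $a_i\in\mathbb{L}^{t+1}_\alpha$ is non-black iff it has a slope-proper predecessor. Here a slope-proper predecessor of $a_i$ is a non-black predecessor $a_k$ of $a_i$ with $(a_i-a_k)/(i-k)\ge s$. *)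

(* Defs.v *)
From HB Require Import structures.
From mathcomp Require Import all_boot all_order all_algebra.
Set Implicit Arguments. Unset Strict Implicit. Unset Printing Implicit Defensive.
Import Order.TTheory GRing.Theory Num.Theory.

(* A sequence alpha = (a_1,...,a_w) is a function 'I_w -> R; items are
   identified with their positions (0-based). *)

Section Defs.
Variables (R : realFieldType) (w : nat) (alpha : 'I_w -> R).
Local Open Scope ring_scope.

Definition inc_subseq_ending (i : 'I_w) (S : {set 'I_w}) : bool :=
  [&& i \in S, [forall x in S, (x <= i)%N] &
      [forall x in S, forall y in S, (x < y)%N ==> (alpha x <= alpha y)]].

Definition RL (i : 'I_w) : nat :=
  \max_(S : {set 'I_w} | inc_subseq_ending i S) #|S|.

Definition compatible (j i : 'I_w) : bool := (j < i)%N && (alpha j <= alpha i).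

Definition predecessor (j i : 'I_w) : bool :=
  compatible j i && (RL j == (RL i).-1)%N.

Definition inL (t : nat) (i : 'I_w) : bool := (RL i == t)%N.

Definition slope_ok (s : R) (k i : 'I_w) : bool :=
  s <= (alpha i - alpha k) / ((nat_of_ord i)%:R - (nat_of_ord k)%:R).

Fixpoint nonblack_lvl (s : R) (t : nat) (i : 'I_w) : bool :=
  match t with
  | 0 => false
  | t'.+1 =>
      inL t'.+1 i &&
      (if t' is 0 then true
       else [exists k : 'I_w,
               [&& predecessor k i, nonblack_lvl s t' k & slope_ok s k i]])
  end.

Definition nonblack (s : R) (i : 'I_w) : bool := nonblack_lvl s (RL i) i.

Definition slope_proper_pred (s : R) (k i : 'I_w) : bool :=
  [&& predecessor k i, nonblack s k & slope_ok s k i].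

Definition leftmost_spp (s : R) (k i : 'I_w) : Prop :=
  slope_proper_pred s k i /\
  forall k' : 'I_w, slope_proper_pred s k' i -> (k <= k')%N.

End Defs.

(* Main.v *)
Require Import Defs.
From HB Require Import structures.
From mathcomp Require Import all_boot all_order all_algebra.
From mathcomp Require Import lra.
Import Order.TTheory GRing.Theory Num.Theory.
Local Open Scope ring_scope.

Lemma RL_witness (R : realFieldType) (w : nat) (alpha : 'I_w -> R) (p : 'I_w) :
  exists S, inc_subseq_ending alpha p S /\ RL alpha p = #|S|.
Proof.
have h1 : inc_subseq_ending alpha p [set p].
  apply/and3P; split; first by rewrite in_set1.
  - by apply/forallP => x; apply/implyP; rewrite in_set1 => /eqP ->.
  - apply/forallP => x; apply/implyP; rewrite in_set1 => /eqP ->.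
    apply/forallP => y; apply/implyP; rewrite in_set1 => /eqP ->.
    by rewrite ltnn.
have hA : (0 < #|[pred S | inc_subseq_ending alpha p S]|)%N.
  by apply/card_gt0P; exists [set p].
have [S0 HS0 Heq] := eq_bigmax_cond (fun S : {set 'I_w} => #|S|) hA.
by exists S0; split => //; rewrite /RL -Heq.
Qed.

Lemma RL_compat (R : realFieldType) (w : nat) (alpha : 'I_w -> R) (p q : 'I_w) :
  compatible alpha p q -> (RL alpha p < RL alpha q)%N.
Proof.
move=> /andP [pq apq].
have [S [/and3P [pS /forallP Sle /forallP Sinc] ->]] := @RL_witness _ _ alpha p.
have qS : q \notin S.
  apply/negP => /(fun h => implyP (Sle q) h); rewrite leqNgt pq //.
have hS : inc_subseq_ending alpha q (q |: S).
  apply/and3P; split; first by rewrite setU11.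
  - apply/forallP => x; apply/implyP; rewrite in_setU1 => /orP [/eqP -> //|xS].
    exact: leq_trans (implyP (Sle x) xS) (ltnW pq).
  - apply/forallP => x; apply/implyP; rewrite in_setU1 => hx.
    apply/forallP => y; apply/implyP; rewrite in_setU1 => hy.
    apply/implyP => xy.
    case/orP: hx => [/eqP ex|xS].
      case/orP: hy => [/eqP ey|yS]; first by rewrite ex ey ltnn in xy.
      have yq := implyP (Sle y) yS.
      move: xy; rewrite ex => xy.
      have := leq_trans xy (leq_trans yq (ltnW pq)); by rewrite ltnn.
    have xp : (alpha x <= alpha p).
      case: (eqVneq x p) => [-> //|nxp].
      have xle := implyP (Sle x) xS.
      have xlt : (x < p)%N by rewrite ltn_neqAle xle andbT; apply: contra nxp => /eqP e; apply/eqP/val_inj.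
      have Hx := forallP (implyP (Sinc x) xS).
      exact: (implyP (implyP (Hx p) pS) xlt).
    case/orP: hy => [/eqP ->|yS]; first exact: le_trans xp apq.
    have Hx := forallP (implyP (Sinc x) xS).
    exact: (implyP (implyP (Hx y) yS) xy).
have := @leq_bigmax_cond _ _ (fun S : {set 'I_w} => #|S|) _ hS.
by rewrite cardsU1 qS /= add1n; rewrite /RL.
Qed.

Theorem mainTheorem12 (R : realFieldType) (s : R) (w : nat)
    (alpha : 'I_w -> R) (t : nat) (i j k : 'I_w) :
  0 <= s ->
  inL alpha t.+1 i -> inL alpha t.+1 j -> (i < j)%N ->
  inL alpha t k ->
  leftmost_spp alpha s k i ->
  (forall k' : 'I_w, slope_proper_pred alpha s k' j -> k' = k \/ (k < k')%N) /\
  (forall k' : 'I_w, leftmost_spp alpha s k' j -> k' = k \/ (k < k')%N).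
Proof.
move=> s0 Li Lj ij Lk [Hk Hmin].
have first : forall k' : 'I_w, slope_proper_pred alpha s k' j -> k' = k \/ (k < k')%N.
  move=> k' hk'.
  case: (ltngtP k k') => [lt|gt|eq]; [by right | | by left; apply/val_inj].
  exfalso.
  move: (hk') => /and3P [/andP [/andP [kj akj] /eqP rk] nb sl].
  have aij : alpha j < alpha i.
    rewrite ltNge; apply/negP => aij.
    have := @RL_compat _ _ alpha i j (introT andP (conj ij aij)).
    by rewrite (eqP Li) (eqP Lj) ltnn.
  suff : slope_proper_pred alpha s k' i by move/Hmin; rewrite leqNgt gt.
  move: Hk => /and3P [/andP [/andP [ki0 _] _] _ _].
  have ki : (k' < i)%N by apply: ltn_trans gt ki0.
  apply/and3P; split => //.
    apply/andP; split; first by apply/andP; split => //; apply: (le_trans akj); exact: ltW.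
    by rewrite rk (eqP Li) (eqP Lj).
  move: sl; rewrite /slope_ok.
  have d0 : 0 < (nat_of_ord i)%:R - (nat_of_ord k')%:R :> R by rewrite subr_gt0 ltr_nat.
  have dD : (nat_of_ord i)%:R < (nat_of_ord j)%:R :> R by rewrite ltr_nat.
  have D0 : 0 < (nat_of_ord j)%:R - (nat_of_ord k')%:R :> R by rewrite subr_gt0 ltr_nat.
  rewrite !ler_pdivlMr //.
  move: d0 dD D0 aij s0.
  set a := (nat_of_ord i)%:R; set b := (nat_of_ord j)%:R; set c := (nat_of_ord k')%:R.
  move=> *; nra.
split=> // k' [h _]; exact: first.
Qed.
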